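(* Let $T$ be a tournament, let $v$ be a vertex with $d^-(v)=0$, and let $M\subseteq V(T)$. Then $T$ is $M$-sparse if and only if $T-v$ is $(M\setminus\{v\})$-sparse.
   Context: A tournament is a digraph with exactly one arc between each pair of distinct vertices; $d^-(v)$ is the in-degree of $v$ and $T-v$ is the subtournament induced by $V(T)\setminus\{v\}$. For an ordering $\sigma$ of the vertices, an arc $(x,y)$ is backward if $y$ precedes $x$, and $d_\sigma(u)$ is the number of backward arcs incident to $u$. For a tournament $S$ and $N\subseteq V(S)$, $S$ is $N$-sparse if there is an ordering $\sigma$ of $V(S)$ with $d_\sigma(u)\le1$ for all $u$ and $d_\sigma(u)=0$ for all $u\in N$. *)

(* Defs.v *)
From mathcomp Require Import all_boot.
Set Implicit Arguments. Unset Strict Implicit. Unset Printing Implicit Defensive.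

Definition is_tournament (V : finType) (arc : rel V) : Prop :=
  (forall x, ~~ arc x x) /\ (forall x y, x != y -> arc x y != arc y x).

Definition indeg (V : finType) (arc : rel V) (v : V) : nat :=
  #|[set u | arc u v]|.

Definition is_ordering (V : finType) (S : {set V}) (s : seq V) : Prop :=
  uniq s /\ s =i S.

Definition backward (V : finType) (arc : rel V) (s : seq V) (x y : V) : bool :=
  arc x y && (index y s < index x s).

Definition dsig (V : finType) (arc : rel V) (s : seq V) (u : V) : nat :=
  count (fun w => backward arc s u w || backward arc s w u) s.

Definition sparse (V : finType) (arc : rel V) (S N : {set V}) : Prop :=
  exists s : seq V, is_ordering S s /\
    (forall u, u \in S -> dsig arc s u <= 1) /\
    (forall u, u \in S -> u \in N -> dsig arc s u = 0).

(* Main.v *)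
Require Import Defs.
From mathcomp Require Import all_boot zify.

Section H.
Variables (V : finType) (arc : rel V) (v : V).

Lemma idx_lt (s1 s2 : seq V) x y : v \notin s1 -> x != v -> y != v ->
  (index x (s1 ++ v :: s2) < index y (s1 ++ v :: s2)) =
  (index x (s1 ++ s2) < index y (s1 ++ s2)).
Proof.
move=> vs1 xv yv; rewrite !index_cat /= eq_sym (negbTE xv) eq_sym (negbTE yv).
case xs: (x \in s1); case ys: (y \in s1) => //.
- have h : index x s1 < size s1 by rewrite index_mem xs.
  by apply/idP/idP; lia.
- have h : index y s1 < size s1 by rewrite index_mem ys.
  by apply/idP/idP; lia.
- by apply/idP/idP; lia.
Qed.

Lemma dsig_lem (s1 s2 : seq V) u : v \notin s1 -> v \notin s2 -> u != v ->
  dsig arc (s1 ++ v :: s2) u =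
  (backward arc (s1 ++ v :: s2) u v || backward arc (s1 ++ v :: s2) v u)
  + dsig arc (s1 ++ s2) u.
Proof.
move=> v1 v2 uv; rewrite /dsig !count_cat /= addnCA; congr (_ + (_ + _)).
- apply: eq_in_count => w ws; have wv : w != v by apply: contraNneq v1 => <-.
  by rewrite /backward !idx_lt.
- apply: eq_in_count => w ws; have wv : w != v by apply: contraNneq v2 => <-.
  by rewrite /backward !idx_lt.
Qed.
End H.

Theorem mainTheorem14 (V : finType) (arc : rel V) (v : V) (M : {set V}) :
  is_tournament arc -> indeg arc v = 0 ->
  sparse arc [set: V] M <-> sparse arc ([set: V] :\ v) (M :\ v).
Proof.
move=> _ hdeg.
have hin : forall u, arc u v = false.
  move=> u; apply/negP => h; move: hdeg; rewrite /indeg => /eqP; rewrite cards_eq0.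
  by move/eqP/setP/(_ u); rewrite !inE h.
split.
- case=> s [[us hs] [Hd Hz]].
  have vs : v \in s by rewrite hs inE.
  move: us hs Hd Hz; case/splitPr: vs => s1 s2 us hs Hd Hz.
  have us' := us; rewrite cat_uniq /= in us'.
  case/and3P: us' => u1 /norP[v1 hn] /andP[v2 u2].
  have ucat : uniq (s1 ++ s2) by rewrite cat_uniq u1 u2 hn.
  exists (s1 ++ s2); split; [split=> // x|split=> u].
  + rewrite !inE andbT; case: eqVneq => [->|xv] /=.
      by rewrite mem_cat (negbTE v1) (negbTE v2).
    by have := hs x; rewrite inE mem_cat in_cons (negbTE xv) mem_cat.
  + rewrite !inE andbT => uv; have := Hd u; rewrite inE dsig_lem // => /(_ isT) h.
    by apply: leq_trans h; rewrite leq_addl.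
  + rewrite !inE andbT => uv /andP[_ um]; have := Hz u; rewrite inE dsig_lem // => /(_ isT um).
    by move/eqP; rewrite addn_eq0 => /andP[_ /eqP].
- case=> s [[us hs] [Hd Hz]].
  have vs : v \notin s by rewrite hs !inE eqxx.
  have d0 : dsig arc (v :: s) v = 0.
    apply/eqP; rewrite eqn0Ngt -has_count; apply/hasPn => w _.
    by rewrite /backward /= eqxx ltn0 andbF hin.
  have dE : forall u, u != v -> dsig arc (v :: s) u = dsig arc s u.
    move=> u uv; have := @dsig_lem V arc v [::] s u isT vs uv; rewrite /= => ->//.
    by rewrite /backward /= eqxx ltn0 andbF hin.
  exists (v :: s); split; [split=> [|x]|split=> u _].
  + by rewrite /= vs.
  + by rewrite in_cons hs !inE andbT; case: eqVneq.
  + case: (eqVneq u v) => [->|uv]; first by rewrite d0.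
    by rewrite dE // Hd // !inE uv.
  + case: (eqVneq u v) => [->|uv]; first by rewrite d0.
    by rewrite dE // => um; apply: Hz; rewrite !inE uv.
Qed.
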